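(* In the setting described in the context, let $$X=W^{1/2}R^T\big(RWR^TL_{e,s}^\tau RWR^T\big)^{-1}RW^{1/2},\qquad X_1=W^{-1/2}R^\dagger(L_{e,s}^\tau)^{-1}(R^\dagger)^TW^{-1/2},$$ where $R^\dagger$ is the Moore–Penrose pseudoinverse of $R$. Then $\lambda_{\max}(X_1)\ge\lambda_{\max}(X)$.
   Context: Let $\mathcal G$ be an undirected, connected graph without self-loops, with node set $\{1,\dots,n\}$ ($n\ge2$) and edge set $\mathcal E$, $m=|\mathcal E|$. Give each edge an arbitrary orientation; the incidence matrix $D\in\mathbb R^{n\times m}$ has $D_{il}=1$ if node $i$ is the initial node of edge $l$, $-1$ if it is the terminal node, and $0$ otherwise. Fix a spanning tree $\mathcal G_\tau$ and order the edges so the first $n-1$ are tree edges; write $D=[D_\tau\ D_c]$ with $D_\tau\in\mathbb R^{n\times(n-1)}$. Set $T_\tau^c=(D_\tau^TD_\tau)^{-1}D_\tau^TD_c$ and $R=[I_{n-1}\ T_\tau^c]\in\mathbb R^{(n-1)\times m}$. Let $W=\mathrm{diag}(w_1,\dots,w_m)$, $w_l>0$, and $E=\mathrm{diag}(\epsilon_1,\dots,\epsilon_n)$, $\epsilon_i>0$; powers of these diagonal matrices are taken entrywise. Define $L_{e,s}^\tau=D_\tau^TE^{-1}D_\tau$. $\lambda_{\max}$ denotes the largest eigenvalue of a symmetric matrix. *)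

(* Defs.v *)
From HB Require Import structures.
From mathcomp Require Import all_boot all_order all_algebra.
From mathcomp Require Import polyrcf.
Set Implicit Arguments. Unset Strict Implicit. Unset Printing Implicit Defensive.
Import Order.TTheory GRing.Theory Num.Theory.
Local Open Scope ring_scope.

(* A graph with node set 'I_n and edge set 'I_m, each edge l given an
   orientation: initial node s l, terminal node t l. *)

Definition simple_graph (n m : nat) (s t : 'I_m -> 'I_n) : Prop :=
  (forall l, s l != t l) /\
  (forall l l', l != l' ->
     ~~ (((s l == s l') && (t l == t l')) || ((s l == t l') && (t l == s l')))).

Definition gadj (n m : nat) (s t : 'I_m -> 'I_n) (P : pred 'I_m) : rel 'I_n :=
  fun i j => [exists l, P l && (((s l == i) && (t l == j)) || ((s l == j) && (t l == i)))].

Definition connected_on (n m : nat) (s t : 'I_m -> 'I_n) (P : pred 'I_m) : Prop :=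
  forall i j : 'I_n, connect (gadj s t P) i j.

(* edges are 'I_(n.-1 + k); the first n-1 edges (val l < n.-1) form a spanning tree:
   a connected spanning subgraph with exactly n-1 edges *)
Definition first_edges_spanning_tree (n k : nat) (s t : 'I_(n.-1 + k) -> 'I_n) : Prop :=
  connected_on s t (fun l => (val l < n.-1)%N).

Definition incidence (R : ringType) (n m : nat) (s t : 'I_m -> 'I_n) : 'M[R]_(n, m) :=
  \matrix_(i, l) (if s l == i then 1 else if t l == i then -1 else 0).

Section Mats.
Variables (R : rcfType) (n k : nat) (s t : 'I_(n.-1 + k) -> 'I_n).
Variables (w : 'I_(n.-1 + k) -> R) (eps : 'I_n -> R).

Definition Dmat : 'M[R]_(n, n.-1 + k) := incidence R s t.
Definition Dtau : 'M[R]_(n, n.-1) := lsubmx Dmat.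
Definition Dc : 'M[R]_(n, k) := rsubmx Dmat.
Definition Ttc : 'M[R]_(n.-1, k) := invmx (Dtau^T *m Dtau) *m Dtau^T *m Dc.
Definition Rmat : 'M[R]_(n.-1, n.-1 + k) := row_mx 1%:M Ttc.

Definition Wmat : 'M[R]_(n.-1 + k) := diag_mx (\row_l w l).
Definition Wsqrt : 'M[R]_(n.-1 + k) := diag_mx (\row_l Num.sqrt (w l)).
Definition Wsqrtinv : 'M[R]_(n.-1 + k) := diag_mx (\row_l (Num.sqrt (w l))^-1).
Definition Einv : 'M[R]_n := diag_mx (\row_i (eps i)^-1).

Definition Lest : 'M[R]_(n.-1) := Dtau^T *m Einv *m Dtau.

Definition Xmat : 'M[R]_(n.-1 + k) :=
  Wsqrt *m Rmat^T
  *m invmx (Rmat *m Wmat *m Rmat^T *m Lest *m Rmat *m Wmat *m Rmat^T)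
  *m Rmat *m Wsqrt.

Definition X1mat (Rd : 'M[R]_(n.-1 + k, n.-1)) : 'M[R]_(n.-1 + k) :=
  Wsqrtinv *m Rd *m invmx Lest *m Rd^T *m Wsqrtinv.
End Mats.

(* B is the Moore-Penrose pseudoinverse of A (the four Penrose conditions, real case) *)
Definition is_MP_pinv (R : ringType) (p q : nat) (A : 'M[R]_(p, q)) (B : 'M[R]_(q, p)) : Prop :=
  [/\ A *m B *m A = A, B *m A *m B = B, (A *m B)^T = A *m B & (B *m A)^T = B *m A].

(* largest eigenvalue: the maximum of the real roots of the characteristic
   polynomial (the eigenvalues); 0 if there are none (never the case for
   symmetric matrices of positive size) *)
Definition lambda_max (R : rcfType) (p : nat) (A : 'M[R]_p) : R :=
  let rs := rootsR (char_poly A) in foldr Num.max (head 0 rs) rs.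

(* Main.v *)
Require Import Defs.
From HB Require Import structures.
From mathcomp Require Import all_boot all_order all_algebra.
From mathcomp Require Import polyrcf.
From mathcomp Require Import complex sesquilinear spectral zify ring.
Set Warnings "-notation-overridden -ambiguous-paths".
Import Order.TTheory GRing.Theory Num.Theory.
Local Open Scope ring_scope.

Lemma foldr_max_mem (R : rcfType) (d : R) (s : seq R) : foldr Num.max d s \in d :: s.
Proof.
elim: s => [|x s IH] /=; first by rewrite inE.
rewrite /Num.max; case: ifP => _; last by rewrite !inE eqxx orbT.
move: IH; rewrite !inE => /orP[->|->]; by rewrite ?orbT.
Qed.

Lemma foldr_max_ge (R : rcfType) (d : R) (s : seq R) x : x \in s -> x <= foldr Num.max d s.
Proof.
elim: s => [|y s IH] //=; rewrite inE => /orP[/eqP->|/IH h]; rewrite le_max ?lexx //.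
by rewrite h orbT.
Qed.

Lemma lmax_ge (R : rcfType) p (A : 'M[R]_p) r : root (char_poly A) r -> r <= lambda_max A.
Proof.
move=> hr; rewrite /lambda_max; apply: foldr_max_ge.
have := roots_on_rootsR (monic_neq0 (char_poly_monic A)) r.
by rewrite hr andbT => <-.
Qed.

Lemma lmax_cases (R : rcfType) p (A : 'M[R]_p) :
  lambda_max A = 0 \/ root (char_poly A) (lambda_max A).
Proof.
rewrite /lambda_max; case E: (rootsR (char_poly A)) => [|x s] /=; first by left.
right; have h := @foldr_max_mem _ x (x :: s).
have : foldr Num.max x (x :: s) \in rootsR (char_poly A).
  by rewrite E; move: h; rewrite !inE; case/orP=> [->|->] //.
have := roots_on_rootsR (monic_neq0 (char_poly_monic A)) (foldr Num.max x (x :: s)).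
by move=> <- /andP[].
Qed.


Notation rc R := (real_complex R).

Lemma conj_rc (R : rcfType) (x : R) : ((rc R x : R[i])^*)%R = rc R x.
Proof. by apply: conj_Creal; rewrite complex_real. Qed.

Lemma cc_gt0 (R : rcfType) q (c : 'rV[R]_q) : c != 0 -> 0 < (c *m c^T) 0 0.
Proof.
move=> c0; rewrite !mxE lt0r; apply/andP; split; last first.
  by apply: sumr_ge0 => j _; rewrite mxE -expr2 sqr_ge0.
apply/negP => /eqP/psumr_eq0P h; case/eqP: c0; apply/rowP => j.
have hge : forall i : 'I_q, true -> 0 <= c 0 i * c^T i 0.
  by move=> i _; rewrite mxE -expr2 sqr_ge0.
have := h hge j isT.
rewrite mxE -expr2 => /eqP; rewrite sqrf_eq0 => /eqP ->; by rewrite mxE.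
Qed.


Lemma key (R : rcfType) q (S : 'M[R]_q) (c : 'rV[R]_q) lam :
  S^T = S -> c != 0 -> lam * (c *m c^T) 0 0 <= (c *m S *m c^T) 0 0 ->
  lam <= lambda_max S.
Proof.
move=> Ssym c0 hray.
set A := map_mx (rc R) S.
have Aherm : A \is hermsymmx.
  apply/is_hermitianmxP; rewrite expr0 scale1r.
  apply/matrixP => i j; rewrite !mxE conj_rc.
  by rewrite -[in RHS]Ssym mxE.
have /orthomx_spectralP Aeq := hermitian_normalmx Aherm.
set U := spectralmx A in Aeq; set d := spectral_diag A in Aeq.
have dreal := hermitian_spectral_diag_real Aherm.
have Uu : U \is unitarymx := spectral_unitarymx A.
have Uunit : U \in unitmx := unitarymx_unit Uu.
have dle : forall i, d 0 i <= rc R (lambda_max S).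
  move=> i.
  have dr : d 0 i \is Num.real by move/mxOverP: dreal; apply.
  have hroot : root (char_poly A) (d 0 i).
    rewrite -eigenvalue_root_char; apply/eigenvalueP; exists (row i U).
      rewrite Aeq rowE !mulmxA mulmxK //.
      by rewrite -[_ *m diag_mx d]rowE row_diag_mx scalemxAl.
    apply/eqP => h0; have : row i U *m invmx U = 0 by rewrite h0 mul0mx.
    rewrite rowE mulmxK // => /matrixP /(_ 0 i); rewrite !mxE !eqxx /=.
    by move/eqP; rewrite oner_eq0.
  rewrite -(RRe_real dr) lecR; apply: lmax_ge.
  rewrite -(fmorph_root (rc R)) map_char_poly.
  by move: hroot; rewrite -{1}(RRe_real dr).
set z := map_mx (rc R) c.
have ct : (z ^t* )%sesqui = map_mx (rc R) c^T.
  by apply/matrixP => i j; rewrite !mxE conj_rc.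
have zA : (z *m A *m (z ^t* )%sesqui) 0 0 = rc R ((c *m S *m c^T) 0 0).
  by rewrite ct -!map_mxM mxE.
have zz : (z *m (z ^t* )%sesqui) 0 0 = rc R ((c *m c^T) 0 0).
  by rewrite ct -!map_mxM mxE.
set w := z *m (U ^t* )%sesqui.
have UtU : (U ^t* )%sesqui *m U = 1%:M by rewrite -invmx_unitary // mulVmx.
have UUt : U *m (U ^t* )%sesqui = 1%:M by apply/unitarymxP.
have zw : z = w *m U by rewrite /w -mulmxA UtU mulmx1.
have zt : (z ^t* )%sesqui = (U ^t* )%sesqui *m (w ^t* )%sesqui.
  by rewrite zw trmx_mul map_mxM.
clearbody w.
have e1 : z *m A *m (z ^t* )%sesqui = w *m diag_mx d *m (w ^t* )%sesqui.
  rewrite Aeq zt zw invmx_unitary // !mulmxA -(mulmxA w) UUt mulmx1.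
  by rewrite -(mulmxA _ U) UUt mulmx1.
have e2 : z *m (z ^t* )%sesqui = w *m (w ^t* )%sesqui.
  by rewrite zt zw !mulmxA -(mulmxA w) UUt mulmx1.
have e3 : (w *m diag_mx d *m (w ^t* )%sesqui) 0 0 =
    \sum_j d 0 j * (w 0 j * (w 0 j)^* ).
  rewrite mul_mx_diag mxE; apply: eq_bigr => j _; rewrite !mxE.
  by rewrite [w 0 j * _]mulrC -mulrA.
have e4 : (w *m (w ^t* )%sesqui) 0 0 = \sum_j (w 0 j * (w 0 j)^* ).
  by rewrite mxE; apply: eq_bigr => j _; rewrite !mxE.
have : rc R (lam * (c *m c^T) 0 0) <= rc R (lambda_max S * (c *m c^T) 0 0).
  apply: (@le_trans _ _ (rc R ((c *m S *m c^T) 0 0))); first by rewrite lecR.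
  rewrite -zA e1 e3 rmorphM /= -zz e2 e4 mulr_sumr.
  apply: ler_sum => j _; apply: ler_wpM2r; [exact: mul_conjC_ge0 | exact: dle].
by rewrite lecR ler_pM2r // cc_gt0.
Qed.


Lemma inj_row_free (F : fieldType) m n (A : 'M[F]_(m,n)) :
  (forall x : 'rV_m, x *m A = 0 -> x = 0) -> row_free A.
Proof.
move=> h; rewrite -kermx_eq0; apply/eqP/row_matrixP => i; rewrite row0.
by apply: h; rewrite -row_mul mulmx_ker row0.
Qed.

Lemma Dtau_edge (R : rcfType) n k (s t : 'I_(n.-1 + k) -> 'I_n) (r : 'rV[R]_n) (l : 'I_(n.-1)) :
  s (lshift k l) != t (lshift k l) ->
  (r *m Dtau R s t) 0 l = r 0 (s (lshift k l)) - r 0 (t (lshift k l)).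
Proof.
set L := lshift k l => hst.
rewrite mxE.
transitivity (\sum_a (r 0 a * (a == s L)%:R - r 0 a * (a == t L)%:R)).
  apply: eq_bigr => a _; rewrite !mxE eq_sym [t L == a]eq_sym.
  case: (eqVneq a (s L)) => [->|nas]; first by rewrite (negbTE hst) mulr1 mulr0 subr0.
  by case: (a == t L); rewrite ?mulr0 ?mulr1 ?subr0 ?sub0r ?mulrN1.
rewrite sumrB (bigD1 (s L)) //= [X in _ - X](bigD1 (t L)) //= !eqxx !mulr1.
by rewrite !big1 ?addr0 // => a /negbTE ->; rewrite mulr0.
Qed.

Lemma Dtau_free (R : rcfType) n k (s t : 'I_(n.-1 + k) -> 'I_n) :
  simple_graph s t -> first_edges_spanning_tree s t ->
  row_free (Dtau R s t)^T.
Proof.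
move=> [hst _] htree.
have kc : forall r : 'rV[R]_n, r *m Dtau R s t = 0 -> forall a b, r 0 a = r 0 b.
  move=> r hr a b; have /connectP [p hp ->] := htree a b.
  elim: p a hp => [|x p IH] a //= /andP[hax hp]; rewrite -(IH x hp).
  case/existsP: hax => l /andP[Pl hl].
  have eL : lshift k (Ordinal Pl) = l by apply: val_inj.
  have := @Dtau_edge R n k s t r (Ordinal Pl); rewrite eL hr mxE => /(_ (hst l)) /esym /eqP.
  rewrite subr_eq0 => /eqP e.
  by case/orP: hl => /andP[/eqP <- /eqP <-].
rewrite /row_free mxrank_tr eqn_leq rank_leq_col /=.
have : (\rank (kermx (Dtau R s t)) <= 1)%N.
  apply: (leq_trans _ (rank_leq_row (const_mx 1 : 'rV[R]_n))); apply: mxrankS.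
  apply/row_subP => i; set r := row i _.
  have hr : r *m Dtau R s t = 0 by rewrite /r -row_mul mulmx_ker row0.
  clearbody r.
  have -> : r = r 0 i *: const_mx 1.
    by apply/rowP => j; rewrite !mxE mulr1 (kc r hr j i).
  by rewrite scalemx_sub.
rewrite mxrank_ker; lia.
Qed.


Lemma pd_unit {F : rcfType} p (A : 'M[F]_p) :
  (forall x : 'rV_p, x != 0 -> 0 < (x *m A *m x^T) 0 0) -> A \in unitmx.
Proof.
move=> h; rewrite -row_free_unit; apply: inj_row_free => x hx.
case: (eqVneq x 0) => // /h; by rewrite hx mul0mx mxE ltxx.
Qed.

Lemma pd_psd {F : rcfType} p (A : 'M[F]_p) (z : 'rV_p) :
  (forall x : 'rV_p, x != 0 -> 0 < (x *m A *m x^T) 0 0) -> 0 <= (z *m A *m z^T) 0 0.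
Proof.
move=> h; case: (eqVneq z 0) => [->|/h/ltW //]; by rewrite !mul0mx mxE.
Qed.

Lemma alg (F : rcfType) p q (Rm : 'M[F]_(p, q)) (Rd : 'M[F]_(q, p))
  (Sw Swi Wm : 'M[F]_q) (L : 'M[F]_p) :
  (0 < q)%N ->
  Rm *m Rd = 1%:M -> Sw^T = Sw -> Swi^T = Swi -> Sw *m Sw = Wm -> Sw *m Swi = 1%:M ->
  L^T = L -> (forall x : 'rV_p, x != 0 -> 0 < (x *m L *m x^T) 0 0) ->
  lambda_max (Sw *m Rm^T *m invmx (Rm *m Wm *m Rm^T *m L *m Rm *m Wm *m Rm^T) *m Rm *m Sw)
  <= lambda_max (Swi *m Rd *m invmx L *m Rd^T *m Swi).
Proof.
move=> q0 RRd Sws Swis SwW SwSwi Ls Lpd.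
have Minj : forall x : 'rV_p, x *m Rm = 0 -> x = 0.
  by move=> x h; rewrite -[x]mulmx1 -RRd mulmxA h mul0mx.
set M := Rm *m Wm *m Rm^T.
have Mid : forall x : 'rV_p, x *m M *m x^T = (x *m Rm *m Sw) *m (x *m Rm *m Sw)^T.
  move=> x; rewrite /M -SwW !trmx_mul Sws !mulmxA.
  by [].
have Mpd : forall x : 'rV_p, x != 0 -> 0 < (x *m M *m x^T) 0 0.
  move=> x x0; rewrite Mid; apply: cc_gt0; apply/eqP => h.
  have : x *m Rm = 0 by rewrite -[x *m Rm]mulmx1 -SwSwi mulmxA h mul0mx.
  by move/Minj/eqP; rewrite (negbTE x0).
have Wms : Wm^T = Wm by rewrite -SwW trmx_mul Sws.
have Ms : M^T = M by rewrite /M !trmx_mul trmxK Wms mulmxA.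
have Keq : Rm *m Wm *m Rm^T *m L *m Rm *m Wm *m Rm^T = M *m L *m M by rewrite /M !mulmxA.
have Mdef : M = Rm *m Wm *m Rm^T by [].
rewrite Keq; clearbody M; set K := M *m L *m M.
have Mu : M \in unitmx := @pd_unit F _ _ Mpd.
have Lu : L \in unitmx := @pd_unit F _ _ Lpd.
have Ku : K \in unitmx by rewrite /K !unitmx_mul Mu Lu.
have Ks : K^T = K by rewrite /K !trmx_mul Ms Ls mulmxA.
set X := Sw *m Rm^T *m invmx K *m Rm *m Sw.
set X1 := Swi *m Rd *m invmx L *m Rd^T *m Swi.
have Xs : X^T = X by rewrite /X !trmx_mul trmxK trmx_inv Ks Sws !mulmxA.
have X1s : X1^T = X1 by rewrite /X1 !trmx_mul trmxK trmx_inv Ls Swis !mulmxA.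
have Lipsd : forall y : 'rV_p, 0 <= (y *m invmx L *m y^T) 0 0.
  move=> y; have -> : y *m invmx L *m y^T = (y *m invmx L) *m L *m (y *m invmx L)^T.
    by rewrite trmx_mul trmx_inv Ls -!mulmxA (mulmxA L) mulmxV // mul1mx.
  exact: pd_psd.
have X1psd : forall c : 'rV_q, 0 <= (c *m X1 *m c^T) 0 0.
  move=> c; have -> : c *m X1 *m c^T = (c *m Swi *m Rd) *m invmx L *m (c *m Swi *m Rd)^T.
    by rewrite /X1 !trmx_mul Swis !mulmxA.
  exact: Lipsd.
have caseA : 0 <= lambda_max X1.
  have c0 : (const_mx 1 : 'rV[F]_q) != 0.
    apply/eqP => /rowP /(_ (Ordinal q0)); rewrite !mxE => /eqP; by rewrite oner_eq0.
  apply: (@key F q X1 _ 0 X1s c0); rewrite mul0r; exact: X1psd.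
case: (@lmax_cases F q X) => [->|hroot] //.
case: (lerP (lambda_max X) 0) => [hle|hgt]; first exact: le_trans hle caseA.
set lam := lambda_max X in hroot hgt *.
move: hroot; rewrite -eigenvalue_root_char => /eigenvalueP [v hv v0].
have SwiSw : Swi *m Sw = 1%:M by apply: mulmx1C.
have cSw : forall m (C : 'M_(m, q)), C *m Sw *m Swi = C.
  by move=> m C; rewrite -mulmxA SwSwi mulmx1.
have cSwi : forall m (C : 'M_(m, q)), C *m Swi *m Sw = C.
  by move=> m C; rewrite -mulmxA SwiSw mulmx1.
have cR : forall m (C : 'M_(m, p)), C *m Rm *m Rd = C.
  by move=> m C; rewrite -mulmxA RRd mulmx1.
have cRt : forall m (C : 'M_(m, p)), C *m Rd^T *m Rm^T = C.
  by move=> m C; rewrite -mulmxA -trmx_mul RRd trmx1 mulmx1.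
set u := v *m Sw *m Rm^T *m invmx K.
have hu : u *m Rm *m Sw = lam *: v by rewrite -hv /X /u !mulmxA.
have huM : u *m M *m invmx K = lam *: u.
  by rewrite Mdef -SwW !mulmxA hu -!scalemxAl.
have hu2 : u *m M = lam *: (u *m M *m L *m M).
  by rewrite -{1}[u *m M](mulmxKV Ku) huM -scalemxAl /K !mulmxA.
have hu3 : u *m invmx L = lam *: (u *m M).
  have e : u = lam *: (u *m M *m L).
    by rewrite -{1}[u](mulmxK Mu) {1}hu2 -scalemxAl mulmxK.
  by rewrite {1}e -scalemxAl mulmxK.
clearbody u.
have q1 : (lam *: v) *m X1 *m (lam *: v)^T = u *m invmx L *m u^T.
  by rewrite -hu /X1 !trmx_mul Sws !mulmxA cSw cR cSwi cRt.
have q2 : (lam *: v) *m (lam *: v)^T = u *m M *m u^T.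
  by rewrite -hu Mdef -SwW !trmx_mul Sws !mulmxA.
have sc : forall B : 'M_q, (lam *: v) *m B *m (lam *: v)^T = (lam * lam) *: (v *m B *m v^T).
  by move=> B; rewrite linearZ /= -!scalemxAl -scalemxAr scalerA.
have sc2 : (lam *: v) *m (lam *: v)^T = (lam * lam) *: (v *m v^T).
  by rewrite linearZ /= -!scalemxAl -scalemxAr scalerA.
have eq : (lam * lam) *: (v *m X1 *m v^T) = lam *: ((lam * lam) *: (v *m v^T)).
  by rewrite -sc -sc2 q1 q2 hu3 -scalemxAl.
have eq0 : (v *m X1 *m v^T) 0 0 = lam * (v *m v^T) 0 0.
  move/matrixP: eq => /(_ 0 0); rewrite !mxE => e.
  have l0 : lam * lam != 0 by rewrite mulf_neq0 // gt_eqF.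
  apply: (mulfI l0); rewrite e; ring.
apply: (@key F q X1 v lam X1s v0); by rewrite eq0.
Qed.


Lemma diag_pd (R : rcfType) p (e : 'I_p -> R) (y : 'rV[R]_p) :
  (forall i, 0 < e i) -> y != 0 -> 0 < (y *m diag_mx (\row_i e i) *m y^T) 0 0.
Proof.
move=> he y0; rewrite mul_mx_diag mxE lt0r; apply/andP; split; last first.
  by apply: sumr_ge0 => j _; rewrite !mxE mulrAC; apply: mulr_ge0; [rewrite -expr2 sqr_ge0 | exact: ltW].
apply/negP => /eqP/psumr_eq0P h; case/eqP: y0; apply/rowP => j.
have hge : forall i : 'I_p, true -> 0 <= (\matrix_(i0, j0) (y i0 j0 * (\row_i1 e i1) 0 j0)) 0 i * y^T i 0.
  by move=> i _; rewrite !mxE mulrAC; apply: mulr_ge0; [rewrite -expr2 sqr_ge0 | exact: ltW].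
have := h hge j isT; rewrite !mxE => /eqP.
rewrite mulf_eq0 mulf_eq0 (gt_eqF (he j)) orbF orbb => /eqP ->.
by rewrite ?mxE.
Qed.

Theorem lemma8 (R : rcfType) (n k : nat) (s t : 'I_(n.-1 + k) -> 'I_n)
  (w : 'I_(n.-1 + k) -> R) (eps : 'I_n -> R) (Rd : 'M[R]_(n.-1 + k, n.-1)) :
  (2 <= n)%N ->
  simple_graph s t ->
  connected_on s t predT ->
  first_edges_spanning_tree s t ->
  (forall l, 0 < w l) ->
  (forall i, 0 < eps i) ->
  is_MP_pinv (@Rmat R n k s t) Rd ->
  lambda_max (@Xmat R n k s t w eps) <= lambda_max (@X1mat R n k s t w eps Rd).
Proof.
move=> n2 hsimp _ htree wpos epos [MP1 _ _ _].
have q0 : (0 < n.-1 + k)%N by lia.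
have RE : Rmat R s t *m col_mx 1%:M 0 = 1%:M.
  by rewrite /Rmat mul_row_col mul1mx mulmx0 addr0.
have RRd : Rmat R s t *m Rd = 1%:M.
  by rewrite -[LHS]mulmx1 -RE mulmxA MP1.
have Sws : (Wsqrt w)^T = Wsqrt w by rewrite /Wsqrt tr_diag_mx.
have Swis : (Wsqrtinv w)^T = Wsqrtinv w by rewrite /Wsqrtinv tr_diag_mx.
have SwW : Wsqrt w *m Wsqrt w = Wmat w.
  rewrite /Wsqrt /Wmat mulmx_diag; congr diag_mx; apply/rowP => j.
  by rewrite !mxE -expr2 sqr_sqrtr // ltW.
have SwSwi : Wsqrt w *m Wsqrtinv w = 1%:M.
  rewrite /Wsqrt /Wsqrtinv mulmx_diag; apply/matrixP => i j.
  rewrite !mxE mulfV; first by case: (i == j).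
  by rewrite gt_eqF // sqrtr_gt0.
have Ls : (Lest s t eps)^T = Lest s t eps.
  by rewrite /Lest !trmx_mul trmxK /Einv tr_diag_mx mulmxA.
have Lpd : forall x : 'rV_(n.-1), x != 0 -> 0 < (x *m Lest s t eps *m x^T) 0 0.
  move=> x x0.
  have -> : x *m Lest s t eps *m x^T = (x *m (Dtau R s t)^T) *m Einv eps *m (x *m (Dtau R s t)^T)^T.
    by rewrite /Lest !trmx_mul trmxK !mulmxA.
  apply: diag_pd => [i|]; first by rewrite invr_gt0.
  by rewrite mulmx_free_eq0 // Dtau_free.
exact: (@alg R _ _ _ _ _ _ _ _ q0 RRd Sws Swis SwW SwSwi Ls Lpd).
Qed.
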